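(* Let $A=\{(x_k,y_k):k\in[\ell]\}\subset\mathbb N^d$ be finite, $d=m+n$. Then for all $\bar k\in[\ell]$: (a) $\mathbb D_{\mathrm{in}}(x_{\bar k},y_{\bar k},T_{\mathbb Q_{-\infty},V}(A))=\mathbb D_{\mathrm{in}}(x_{\bar k},y_{\bar k},Z_{\mathbb Q_{-\infty},V}(A))$; (b) $\mathbb D_{\mathrm{in}}(x_{\bar k},y_{\bar k},T_{\mathbb Q_{-\infty},C}(A))=\mathbb D_{\mathrm{in}}(x_{\bar k},y_{\bar k},Z_{\mathbb Q_{-\infty},C}(A))$; (c) $\mathbb D_{\mathrm{out}}(x_{\bar k},y_{\bar k},T_{\mathbb Q_{-\infty},V}(A))=\mathbb D_{\mathrm{out}}(x_{\bar k},y_{\bar k},Z_{\mathbb Q_{-\infty},V}(A))$; (d) $\mathbb D_{\mathrm{out}}(x_{\bar k},y_{\bar k},T_{\mathbb Q_{-\infty},C}(A))=\mathbb D_{\mathrm{out}}(x_{\bar k},y_{\bar k},Z_{\mathbb Q_{-\infty},C}(A))$.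
   Context: $\mathbb N$ is the set of non-negative integers; $[\ell]=\{1,\dots,\ell\}$; $1\!\!1$ denotes a vector of ones; $\wedge$ is componentwise min. Min-Plus technologies: $T_{\mathbb Q_{-\infty},V}(A)=\{(x,y)\in\mathbb{R}_+^d: x\ge\bigwedge_k(t_k1\!\!1_m+x_k),\ y\le\bigwedge_k(t_k1\!\!1_n+y_k),\ \min_k t_k=0,\ t\in(\mathbb{R}\cup\{+\infty\})^\ell\}$, and $T_{\mathbb Q_{-\infty},C}(A)$ is the same without the constraint $\min_k t_k=0$. Discrete versions: $Z_{\mathbb Q_{-\infty},V}(A)=T_{\mathbb Q_{-\infty},V}(A)\cap\mathbb N^d$, $Z_{\mathbb Q_{-\infty},C}(A)=T_{\mathbb Q_{-\infty},C}(A)\cap\mathbb N^d$. Translation distance functions: $\mathbb D_{\mathrm{in}}(x,y,T)=\sup\{\delta\in\mathbb{R}:(x-\delta1\!\!1_m,y)\in T\}$, $\mathbb D_{\mathrm{out}}(x,y,T)=\sup\{\delta\in\mathbb{R}:(x,y+\delta1\!\!1_n)\in T\}$. *)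

(* Defs.v *)
From HB Require Import structures.
From mathcomp Require Import all_boot all_order all_algebra.
From mathcomp Require Import all_classical all_reals all_analysis.
Set Implicit Arguments. Unset Strict Implicit. Unset Printing Implicit Defensive.
Import Order.TTheory GRing.Theory Num.Theory.
Local Open Scope classical_set_scope.
Local Open Scope ring_scope.

(* The data set A = {(x_k, y_k) : k in [l]} in N^(m+n) is given by
   X : 'I_l -> 'I_m -> nat (inputs) and Y : 'I_l -> 'I_n -> nat (outputs). *)

Definition emin (R : realType) (l : nat) (f : 'I_l -> \bar R) : \bar R :=
  \big[Order.min/+oo%E]_(k < l) f k.

Definition T_minplus (R : realType) (vrs : bool) (m n l : nat)
    (X : 'I_l -> 'I_m -> nat) (Y : 'I_l -> 'I_n -> nat)
    (x : 'I_m -> R) (y : 'I_n -> R) : Prop :=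
  (forall i, 0 <= x i) /\ (forall j, 0 <= y j) /\
  exists t : 'I_l -> \bar R,
    (forall k, t k != -oo%E) /\
    (forall i, (emin (fun k => t k + ((X k i)%:R)%:E) <= (x i)%:E)%E) /\
    (forall j, ((y j)%:E <= emin (fun k => t k + ((Y k j)%:R)%:E))%E) /\
    (vrs -> emin t = 0%E).

Definition TV (R : realType) m n l X Y := @T_minplus R true m n l X Y.
Definition TC (R : realType) m n l X Y := @T_minplus R false m n l X Y.

Definition discr (R : realType) (m n : nat)
    (T : ('I_m -> R) -> ('I_n -> R) -> Prop) (x : 'I_m -> R) (y : 'I_n -> R) : Prop :=
  T x y /\ (forall i, exists a : nat, x i = a%:R) /\ (forall j, exists b : nat, y j = b%:R).

Definition ZV (R : realType) m n l X Y := discr (@TV R m n l X Y).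
Definition ZC (R : realType) m n l X Y := discr (@TC R m n l X Y).

Definition Din (R : realType) (m n : nat) (x : 'I_m -> R) (y : 'I_n -> R)
    (T : ('I_m -> R) -> ('I_n -> R) -> Prop) : \bar R :=
  ereal_sup [set (d%:E)%E | d in [set d : R | T (fun i => x i - d) y]].

Definition Dout (R : realType) (m n : nat) (x : 'I_m -> R) (y : 'I_n -> R)
    (T : ('I_m -> R) -> ('I_n -> R) -> Prop) : \bar R :=
  ereal_sup [set (d%:E)%E | d in [set d : R | T x (fun j => y j + d)]].

Definition ptx (R : realType) m l (X : 'I_l -> 'I_m -> nat) (k : 'I_l) : 'I_m -> R :=
  fun i => (X k i)%:R.
Definition pty (R : realType) n l (Y : 'I_l -> 'I_n -> nat) (k : 'I_l) : 'I_n -> R :=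
  fun j => (Y k j)%:R.

(* Main.v *)
Require Import Defs.
From mathcomp Require Import all_boot all_order all_algebra.
From mathcomp Require Import all_classical all_reals all_analysis.
Import Order.TTheory GRing.Theory Num.Theory.
Local Open Scope classical_set_scope.
Local Open Scope ring_scope.

Section Aux.
Variable R : realType.
Variable g : R -> R.
Hypothesis gmono : forall a b, a <= b -> g a <= g b.
Hypothesis gD : forall a (c : nat), g (a + c%:R) = g a + c%:R.
Hypothesis g0 : g 0 = 0.

Definition eg (e : \bar R) : \bar R :=
  match e with EFin r => EFin (g r) | e => e end.

Lemma eg_mono (a b : \bar R) : (a <= b)%E -> (eg a <= eg b)%E.
Proof.
case: a => [a| |]; case: b => [b| |] //=; rewrite ?lee_fin ?leey ?leNye //.
by move=> /gmono.
Qed.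

Lemma eg_min (a b : \bar R) : eg (Order.min a b) = Order.min (eg a) (eg b).
Proof.
case: (leP a b) => h.
  by rewrite (min_l (@eg_mono _ _ h)).
by rewrite (min_r (@eg_mono _ _ (ltW h))).
Qed.

Lemma eg_emin l (f : 'I_l -> \bar R) : eg (emin f) = emin (fun k => eg (f k)).
Proof.
rewrite /emin; apply: (big_morph eg) => //; exact: eg_min.
Qed.

Lemma egD (e : \bar R) (c : nat) : eg (e + (c%:R)%:E)%E = (eg e + (c%:R)%:E)%E.
Proof. by case: e => [r| |] //=; rewrite gD. Qed.

Lemma emin_ext l (f h : 'I_l -> \bar R) : (forall k, f k = h k) -> emin f = emin h.
Proof. by move=> e; rewrite /emin; apply: eq_bigr => k _; apply: e. Qed.

Lemma round_T vrs m n l (X : 'I_l -> 'I_m -> nat) (Y : 'I_l -> 'I_n -> nat)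
   (x x' : 'I_m -> R) (y y' : 'I_n -> R) :
  T_minplus vrs X Y x y ->
  (forall i, 0 <= x' i) -> (forall j, 0 <= y' j) ->
  (forall i, g (x i) <= x' i) -> (forall j, y' j <= g (y j)) ->
  T_minplus vrs X Y x' y'.
Proof.
move=> [_ [_ [t [tn [hx [hy hv]]]]]] hx' hy' gx gy.
split=> //; split=> //.
exists (fun k => eg (t k)); split; [|split; [|split]].
- by move=> k; move: (tn k); case: (t k).
- move=> i; have := @eg_mono _ _ (hx i); rewrite eg_emin /=.
  rewrite (@emin_ext _ _ _ (fun k => egD _ _)).
  move=> h; apply: (le_trans h); rewrite lee_fin; exact: gx.
- move=> j; have := @eg_mono _ _ (hy j); rewrite eg_emin /=.
  rewrite (@emin_ext _ _ _ (fun k => egD _ _)).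
  move=> h; apply: le_trans h; rewrite lee_fin; exact: gy.
- by move=> /hv; rewrite -eg_emin => ->; rewrite /= g0.
Qed.
End Aux.

Section Main.
Variable R : realType.

Definition gf (r : R) : R := (Num.floor r)%:~R.
Definition gc (r : R) : R := (Num.ceil r)%:~R.

Lemma gf_mono a b : a <= b -> gf a <= gf b.
Proof. by move=> h; rewrite /gf ler_int le_floor. Qed.
Lemma gc_mono a b : a <= b -> gc a <= gc b.
Proof. by move=> h; rewrite /gc ler_int le_ceil. Qed.
Lemma gf_D a (c : nat) : gf (a + c%:R) = gf a + c%:R.
Proof.
rewrite /gf floorDrz ?natr_int // intrD; congr (_ + _).
by rewrite (_ : c%:R = (c%:Z)%:~R) // intrKfloor.
Qed.
Lemma gc_D a (c : nat) : gc (a + c%:R) = gc a + c%:R.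
Proof.
rewrite /gc ceilDrz ?natr_int // intrD; congr (_ + _).
by rewrite (_ : c%:R = (c%:Z)%:~R) // intrKceil.
Qed.
Lemma gf_0 : gf 0 = 0. Proof. by rewrite /gf floor0. Qed.
Lemma gc_0 : gc 0 = 0. Proof. by rewrite /gc ceil0. Qed.

Lemma gf_nat (c : nat) : gf c%:R = c%:R.
Proof. by have := gf_D 0 c; rewrite add0r gf_0 add0r. Qed.
Lemma gc_nat (c : nat) : gc c%:R = c%:R.
Proof. by have := gc_D 0 c; rewrite add0r gc_0 add0r. Qed.

Lemma Din_eq vrs m n l (X : 'I_l -> 'I_m -> nat) (Y : 'I_l -> 'I_n -> nat) kb :
  Din (@ptx R m l X kb) (@pty R n l Y kb) (T_minplus vrs X Y) =
  Din (@ptx R m l X kb) (@pty R n l Y kb) (discr (T_minplus vrs X Y)).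
Proof.
apply/eqP; rewrite eq_le; apply/andP; split; last first.
  by apply: le_ereal_sup => _ [d Hd <-]; exists d => //; exact: Hd.1.
apply: ge_ereal_sup => _ [d Hd <-].
set c := Num.ceil d.
have cX : forall i, (c <= (X kb i)%:Z)%R.
  move=> i; rewrite ceil_le_int.
  have := (Hd.1 i); rewrite /ptx subr_ge0 //.
have Hz : discr (T_minplus vrs X Y) (fun i => ptx R X kb i - c%:~R) (pty R Y kb).
  split; [|split].
  - apply: (@round_T R gf gf_mono gf_D gf_0 _ _ _ _ _ _ _ _ _ _ Hd).
    + move=> i; rewrite /ptx subr_ge0.
      by rewrite (_ : (X kb i)%:R = ((X kb i)%:Z)%:~R) // ler_int.
    + by move=> j; rewrite /pty ler0n.
    + move=> i; rewrite /gf /ptx lerBrDr -lerBrDl.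
      rewrite (_ : (X kb i)%:R - _ = ((X kb i)%:Z - Num.floor ((X kb i)%:R - d))%:~R);
        last by rewrite intrD intrN.
      rewrite ler_int ceil_le_int intrD intrN lerBrDl -lerBrDr.
      exact: floor_le.
    + by move=> j; rewrite /pty gf_nat.
  - move=> i; exists `|(X kb i)%:Z - c|%N.
    by rewrite natr_absz ger0_norm ?subr_ge0 ?cX // intrD intrN /ptx.
  - by move=> j; exists (Y kb j).
apply: (@le_trans _ _ ((c%:~R)%:E)); first by rewrite lee_fin ceil_ge.
by apply: ereal_sup_ubound; exists c%:~R.
Qed.

Lemma Dout_eq vrs m n l (X : 'I_l -> 'I_m -> nat) (Y : 'I_l -> 'I_n -> nat) kb :
  Dout (@ptx R m l X kb) (@pty R n l Y kb) (T_minplus vrs X Y) =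
  Dout (@ptx R m l X kb) (@pty R n l Y kb) (discr (T_minplus vrs X Y)).
Proof.
apply/eqP; rewrite eq_le; apply/andP; split; last first.
  by apply: le_ereal_sup => _ [d Hd <-]; exists d => //; exact: Hd.1.
apply: ge_ereal_sup => _ [d Hd <-].
set c := Num.ceil d.
have cY : forall j, (0 <= (Y kb j)%:Z + c)%R.
  move=> j; rewrite -(ler0z R) intrD.
  have h1 := Hd.2.1 j; apply: (le_trans h1); rewrite /pty.
  by rewrite (_ : ((Y kb j)%:Z)%:~R = (Y kb j)%:R :> R) // lerD2l ceil_ge.
have Hz : discr (T_minplus vrs X Y) (ptx R X kb) (fun j => pty R Y kb j + c%:~R).
  split; [|split].
  - apply: (@round_T R gc gc_mono gc_D gc_0 _ _ _ _ _ _ _ _ _ _ Hd).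
    + by move=> i; rewrite /ptx ler0n.
    + move=> j; have := cY j; rewrite -(ler0z R) intrD //.
    + by move=> i; rewrite /ptx gc_nat.
    + move=> j; rewrite /gc /pty -lerBrDl.
      rewrite (_ : _ - (Y kb j)%:R = (Num.ceil ((Y kb j)%:R + d) - (Y kb j)%:Z)%:~R);
        last by rewrite intrD intrN.
      rewrite ler_int ceil_le_int intrD intrN lerBrDl.
      exact: ceil_ge.
  - by move=> i; exists (X kb i).
  - move=> j; exists (absz ((Y kb j)%:Z + c)).
    by rewrite natr_absz ger0_norm ?cY // intrD.
apply: (@le_trans _ _ ((c%:~R)%:E)); first by rewrite lee_fin ceil_ge.
by apply: ereal_sup_ubound; exists c%:~R.
Qed.
End Main.

Theorem mainTheorem8 (R : realType) (m n l : nat)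
    (X : 'I_l -> 'I_m -> nat) (Y : 'I_l -> 'I_n -> nat) (kb : 'I_l) :
  let xk := @ptx R m l X kb in
  let yk := @pty R n l Y kb in
  [/\ Din xk yk (@TV R m n l X Y) = Din xk yk (@ZV R m n l X Y),
      Din xk yk (@TC R m n l X Y) = Din xk yk (@ZC R m n l X Y),
      Dout xk yk (@TV R m n l X Y) = Dout xk yk (@ZV R m n l X Y)
    & Dout xk yk (@TC R m n l X Y) = Dout xk yk (@ZC R m n l X Y)].
Proof.
move=> xk yk; split; [exact: Din_eq|exact: Din_eq|exact: Dout_eq|exact: Dout_eq].
Qed.
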